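(* Let $(\mathcal{S},\mathcal{A})$ be a finite directed acyclic graph with unique initial state $s_0$ and unique sink state $s_f$. For $i\in\{1,\dots,k\}$ let $p_{i,F}$ be a forward policy on this graph with partition function $Z_i>0$ and reaching probability $u_i$. Let $\omega_1,\dots,\omega_k\ge0$, set $v_i=\omega_iZ_i/\sum_{j=1}^k\omega_jZ_j$, $u_M(s)=\sum_{i=1}^k v_iu_i(s)$, and $$p_{M,F}(s'\mid s)=\sum_{i=1}^k\frac{v_iu_i(s)}{u_M(s)}\,p_{i,F}(s'\mid s)\quad\text{for all } s\in\mathcal{S}\setminus\{s_f\}.$$ Then $u_M$ coincides with the reaching probability induced by $p_{M,F}$: $u_M(s_0)=1$ and $u_M(s)=\sum_{s_*:(s_*\to s)\in\mathcal{A}}u_M(s_* )\,p_{M,F}(s\mid s_* )$ for all $s\in\mathcal{S}\setminus\{s_0\}$.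
   Context: A forward policy $p_F$ assigns to each state $s\neq s_f$ a probability distribution $p_F(\cdot\mid s)$ over the children $s'$ of $s$ (states with $(s\to s')\in\mathcal{A}$). Its reaching probability $u$ is defined by $u(s_0)=1$ and $u(s)=\sum_{s_*:(s_*\to s)\in\mathcal{A}}u(s_* )p_F(s\mid s_* )$ for $s\neq s_0$, i.e. the probability that a trajectory sampled from $p_F$ starting at $s_0$ visits $s$. *)

(* Defs.v *)
From HB Require Import structures.
From mathcomp Require Import all_boot all_order all_algebra.
Set Implicit Arguments. Unset Strict Implicit. Unset Printing Implicit Defensive.
Import Order.TTheory GRing.Theory Num.Theory.
Local Open Scope ring_scope.

Definition is_dag (S : finType) (A : rel S) (s0 sf : S) : Prop :=
  (forall s t : S, A s t -> ~~ connect A t s) /\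
  (forall s : S, [forall t, ~~ A t s] <-> s = s0) /\
  (forall s : S, [forall t, ~~ A s t] <-> s = sf).

Definition forward_policy (R : numDomainType) (S : finType) (A : rel S) (sf : S)
    (pF : S -> S -> R) : Prop :=
  forall s : S, s <> sf ->
    (forall s' : S, A s s' -> 0 <= pF s s') /\
    \sum_(s' | A s s') pF s s' = 1.

Definition reach_prob (R : numDomainType) (S : finType) (A : rel S) (s0 : S)
    (pF : S -> S -> R) (u : S -> R) : Prop :=
  u s0 = 1 /\
  forall s : S, s <> s0 -> u s = \sum_(s_ | A s_ s) u s_ * pF s_ s.

(* Main.v *)
Require Import Defs.
From HB Require Import structures.
From mathcomp Require Import all_boot all_order all_algebra.
Import Order.TTheory GRing.Theory Num.Theory.
Local Open Scope ring_scope.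

Lemma reach_ge0 (R : realFieldType) (S : finType) (A : rel S) (s0 sf : S)
   (pF : S -> S -> R) (u : S -> R) :
  is_dag A s0 sf -> forward_policy A sf pF -> reach_prob A s0 pF u ->
  forall s, 0 <= u s.
Proof.
move=> [acyc [hs0 hsf]] hp [u0 hu].
have key : forall n s, (#|[set t | connect A t s]| < n)%N -> 0 <= u s.
  elim=> [//|n IH] s hn.
  have [->|ns] := eqVneq s s0; first by rewrite u0.
  rewrite (hu s (elimN eqP ns)); apply: sumr_ge0 => t Ats.
  have nt : t <> sf.
    move=> et; have /(hsf t) := et; move/forallP/(_ s); by rewrite Ats.
  apply: mulr_ge0; last by apply: (hp t nt).1.
  apply: IH; rewrite ltnS in hn; apply: (leq_trans _ hn); apply: proper_card; apply/properP; split.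
    apply/subsetP=> x; rewrite !inE => cx; apply: connect_trans cx _.
    exact: connect1.
  exists s; first by rewrite inE connect0.
  by rewrite inE; apply: acyc.
by move=> s; apply: (key _.+1 s).
Qed.

Theorem lemmaA2 (R : realFieldType) (S : finType) (A : rel S) (s0 sf : S)
    (k : nat) (pF : 'I_k -> S -> S -> R) (u : 'I_k -> S -> R)
    (Z w : 'I_k -> R) :
  is_dag A s0 sf ->
  (forall i, forward_policy A sf (pF i)) ->
  (forall i, 0 < Z i) ->
  (forall i, reach_prob A s0 (pF i) (u i)) ->
  (forall i, 0 <= w i) ->
  (exists i, 0 < w i) ->
  let v := fun i => w i * Z i / \sum_(j < k) w j * Z j in
  let uM := fun s => \sum_(i < k) v i * u i s in
  let pM := fun s s' => \sum_(i < k) v i * u i s / uM s * pF i s s' in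
  reach_prob A s0 pM uM.
Proof.
move=> hdag hp hZ hr hw [i0 hi0] v uM pM.
have uge0 i s : 0 <= u i s := @reach_ge0 R S A s0 sf _ _ hdag (hp i) (hr i) s.
set W := \sum_(j < k) w j * Z j.
have Wpos : 0 < W.
  rewrite /W (bigD1 i0) //=; apply: ltr_pwDl; first exact: mulr_gt0.
  by apply: sumr_ge0 => j _; apply: mulr_ge0 => //; apply: ltW.
have vge0 i : 0 <= v i.
  by rewrite /v; apply: divr_ge0; [apply: mulr_ge0 => //; apply: ltW | apply: ltW].
split.
  rewrite /uM; under eq_bigr => i _ do rewrite (hr i).1 mulr1.
  by rewrite /v -mulr_suml mulfV // gt_eqF.
move=> s ns.
have step : forall t, uM t * pM t s = \sum_(i < k) v i * u i t * pF i t s.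
  move=> t; rewrite /pM.
  have -> : \sum_(i < k) v i * u i t / uM t * pF i t s
            = (\sum_(i < k) v i * u i t * pF i t s) / uM t.
    by rewrite mulr_suml; apply: eq_bigr => i _; rewrite mulrAC.
  have [z|nz] := eqVneq (uM t) 0.
    rewrite z mul0r; symmetry; apply: big1 => i _.
    have /psumr_eq0P h : uM t = 0 := z.
    by rewrite h ?mul0r // => j _; apply: mulr_ge0.
  by rewrite mulrC divfK.
rewrite (eq_bigr _ (fun t _ => step t)) exchange_big /uM.
apply: eq_bigr => i _; rewrite ((hr i).2 s ns) mulr_sumr.
by apply: eq_bigr => t _; rewrite mulrA.
Qed.
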